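(* Let $q\ge2$ be an integer, $d$ a positive integer and $F$ a finite field of characteristic $p$. Then the Char-$q$-$s$ network has a $d$-dimensional VLNC solution over $F$ with $s$-coefficient matrix $A_1\ne 0$ on $e_1$ if and only if $p$ divides $q$.
   Context: Vector linear network coding: each source $v$ generates $x_v\in F^d$; an edge out of a source $v$ carries $Ax_v$ for a $d\times d$ matrix $A$ over $F$; an edge out of an intermediate node carries $\sum A_{e',e}y_{e'}$ over the edges $e'$ entering that node; a terminal computes vectors $\sum B_ey_e$ over its incoming edges; a $d$-dimensional VLNC solution over $F$ is such a code with which every terminal computes each demanded message for all message choices. The Char-$q$-$s$ network (integer $q\ge2$): sources $s,x_1,\dots,x_{q+2}$; intermediate nodes $m_1,\dots,m_{q+3},n_1,\dots,n_{q+3}$; terminals $r_1,\dots,r_{q+3}$; edges: $(x_1,m_i)$ for $1\le i\le q+1$; $(s,m_1)$ and $(s,m_i)$ for $4\le i\le q+3$; $(x_i,m_j)$ for $2\le i,j\le q+2$, $i\ne j$; $(x_i,m_{q+3})$ for $1\le i\le q+2$; $e_i=(m_i,n_i)$ for $1\le i\le q+3$; $(n_i,r_i)$ for $1\le i\le q+2$; $(n_{q+3},r_i)$ and $(n_i,r_{q+3})$ for $1\le i\le q+2$; $(x_i,r_1)$ for $2\le i\le q+1$; $(x_1,r_{q+2})$; $(s,r_2)$; $(s,r_3)$. Demands: $r_1$ demands $x_{q+2}$; $r_i$ demands $x_i$ for $2\le i\le q+2$; $r_{q+3}$ demands $x_1$; no terminal demands $s$. In any $d$-dimensional VLNC over $F$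 the vector on $e_1$ has the form $y_{e_1}=M_1x_1+A_1s$ with $d\times d$ matrices $M_1,A_1$; $A_1$ is called the $s$-coefficient matrix on $e_1$. *)

(* Defs.v *)
From HB Require Import structures.
From mathcomp Require Import all_boot all_order all_algebra all_field.
Set Implicit Arguments. Unset Strict Implicit. Unset Printing Implicit Defensive.
Import GRing.Theory.
Local Open Scope ring_scope.

(* Nodes of the Char-q-s network (indices as in the paper, starting at 1). *)
Inductive node : Type :=
| Src_s
| Src_x of nat
| Mid_m of nat
| Mid_n of nat
| Term_r of nat.

Definition is_source (q : nat) (v : node) : bool :=
  match v with
  | Src_s => true
  | Src_x i => (1 <= i <= q.+2)%N
  | _ => false
  end.

Definition nodes (q : nat) : seq node :=
  Src_s :: map Src_x (iota 1 q.+2) ++ map Mid_m (iota 1 q.+3)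
        ++ map Mid_n (iota 1 q.+3) ++ map Term_r (iota 1 q.+3).

(* Edge relation of the Char-q-s network (no parallel edges, so an edge is
   determined by its tail and head). *)
Definition is_edge (q : nat) (u v : node) : bool :=
  match u, v with
  | Src_x i, Mid_m j =>
      [|| (i == 1)%N && (1 <= j <= q.+1)%N,
          [&& (2 <= i <= q.+2)%N, (2 <= j <= q.+2)%N & i != j]
        | (1 <= i <= q.+2)%N && (j == q.+3)%N]
  | Src_s, Mid_m j => (j == 1)%N || (4 <= j <= q.+3)%N
  | Mid_m i, Mid_n j => (i == j) && (1 <= i <= q.+3)%N
  | Mid_n i, Term_r j =>
      [|| (i == j) && (1 <= i <= q.+2)%N,
          (i == q.+3)%N && (1 <= j <= q.+2)%N
        | (1 <= i <= q.+2)%N && (j == q.+3)%N]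
  | Src_x i, Term_r j =>
      ((2 <= i <= q.+1)%N && (j == 1)%N) || ((i == 1)%N && (j == q.+2)%N)
  | Src_s, Term_r j => (j == 2)%N || (j == 3)%N
  | _, _ => false
  end.

Definition demand (q j : nat) : node :=
  if (j == 1)%N then Src_x q.+2
  else if (j == q.+3)%N then Src_x 1
  else Src_x j.

(* A d-dimensional vector linear network code over F.
   - src_coef v w : matrix A on the edge (v,w) out of a source v;
   - loc_coef u v w : local coefficient A_{(u,v),(v,w)} at intermediate node v;
   - dec_coef t u : decoding matrix B_{(u,t)} of terminal t. *)
Record vlnc (F : fieldType) (d : nat) := VLNC {
  src_coef : node -> node -> 'M[F]_d;
  loc_coef : node -> node -> node -> 'M[F]_d;
  dec_coef : node -> node -> 'M[F]_d }.

(* Vector y_(u,v) carried by edge (u,v), given messages msg (msg v = x_v for a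
   source v).  Computed with fuel k; fuel = number of nodes suffices since
   the network is acyclic. *)
Fixpoint edge_vec (F : fieldType) (d q : nat) (c : vlnc F d)
    (msg : node -> 'cV[F]_d) (k : nat) (u v : node) : 'cV[F]_d :=
  match k with
  | 0 => 0
  | k'.+1 =>
      if is_source q u then src_coef c u v *m msg u
      else \sum_(w <- nodes q | is_edge q w u)
             loc_coef c w u v *m edge_vec q c msg k' w u
  end.

Definition y_edge (F : fieldType) (d q : nat) (c : vlnc F d)
    (msg : node -> 'cV[F]_d) (u v : node) : 'cV[F]_d :=
  edge_vec q c msg (size (nodes q)) u v.

Definition term_out (F : fieldType) (d q : nat) (c : vlnc F d)
    (msg : node -> 'cV[F]_d) (t : node) : 'cV[F]_d :=
  \sum_(u <- nodes q | is_edge q u t) dec_coef c t u *m y_edge q c msg u t.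

Definition is_solution (F : fieldType) (d q : nat) (c : vlnc F d) : Prop :=
  forall msg : node -> 'cV[F]_d, forall j : nat, (1 <= j <= q.+3)%N ->
    term_out q c msg (Term_r j) = msg (demand q j).

(* s-coefficient matrix A_1 on e_1 = (m_1, n_1): the only s-contribution to
   y_{e_1} = M_1 x_1 + A_1 s comes through the edge (s, m_1). *)
Definition s_coef_e1 (F : fieldType) (d : nat) (c : vlnc F d) : 'M[F]_d :=
  loc_coef c Src_s (Mid_m 1) (Mid_n 1) *m src_coef c Src_s (Mid_m 1).

(* Main.v *)
Require Import Defs.
From HB Require Import structures.
From mathcomp Require Import all_boot all_order all_algebra all_field.
From mathcomp Require Import zify ring.
Set Implicit Arguments. Unset Strict Implicit. Unset Printing Implicit Defensive.
Import GRing.Theory.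
Local Open Scope ring_scope.

Section Sums.
Variable V : zmodType.
Implicit Types (s : seq nat) (P : pred nat) (G : nat -> V).

Lemma sum_false s P G :
  {in s, forall i, P i = false} -> \sum_(i <- s | P i) G i = 0.
Proof. move=> H; apply: big1_seq => i /andP[Pi si]; by rewrite H in Pi. Qed.

Lemma sum_true s P G :
  {in s, forall i, P i} -> \sum_(i <- s | P i) G i = \sum_(i <- s) G i.
Proof.
move=> H; rewrite big_seq_cond [RHS]big_seq_cond; apply: eq_bigl => i.
case si: (i \in s) => //=; exact: H.
Qed.

Lemma sum_pred1 s P G a : uniq s -> a \in s ->
  {in s, forall i, P i = (i == a)} -> \sum_(i <- s | P i) G i = G a.
Proof.
move=> us ha H; rewrite big_seq_cond (eq_bigl (pred1 a)).
  by rewrite -big_filter filter_pred1_uniq // big_seq1.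
move=> i /=; case si: (i \in s) => /=; first exact: H.
by apply/esym/eqP => e; rewrite e ha in si.
Qed.

Lemma sum_but1 s P G a : uniq s -> a \in s ->
  {in s, forall i, P i = (i != a)} -> \sum_(i <- s | P i) G i = \sum_(i <- s) G i - G a.
Proof.
move=> us ha H; rewrite (bigD1_seq a) //= [G a + _]addrC addrK.
rewrite big_seq_cond [RHS]big_seq_cond; apply: eq_bigl => i.
case si: (i \in s) => //=; exact: H.
Qed.

Lemma sum_delta s P G k0 : uniq s -> k0 \in s ->
  \sum_(k <- s | P k) (if k == k0 then G k else 0) = if P k0 then G k0 else 0.
Proof.
move=> us ks; rewrite big_mkcond (bigD1_seq k0) //= eqxx big1 ?addr0 //.
by move=> i /negbTE ->; case: (P i).
Qed.

Lemma nodes_sum q (P : pred node) (F : node -> V) :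
  \sum_(w <- nodes q | P w) F w =
  (if P Src_s then F Src_s else 0) +
  (\sum_(i <- iota 1 q.+2 | P (Src_x i)) F (Src_x i) +
  (\sum_(i <- iota 1 q.+3 | P (Mid_m i)) F (Mid_m i) +
  (\sum_(i <- iota 1 q.+3 | P (Mid_n i)) F (Mid_n i) +
   \sum_(i <- iota 1 q.+3 | P (Term_r i)) F (Term_r i)))).
Proof. rewrite /nodes big_cons !big_cat !big_map; by case: (P Src_s); rewrite ?add0r. Qed.

End Sums.

Lemma size_nodes q : size (nodes q) = ((4 * q + 9).+3)%N.
Proof. rewrite /nodes -cat1s !size_cat !size_map !size_iota /=; lia. Qed.

Lemma in_iota1 q i : (i \in iota 1 q) = (1 <= i < q.+1)%N.
Proof. by rewrite mem_iota. Qed.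

Section Net.
Variables (F : fieldType) (d q : nat) (c : vlnc F d) (msg : node -> 'cV[F]_d).

Lemma ev_S k u v : edge_vec q c msg k.+1 u v =
  if is_source q u then src_coef c u v *m msg u
  else \sum_(w <- nodes q | is_edge q w u) loc_coef c w u v *m edge_vec q c msg k w u.
Proof. by []. Qed.

Lemma edge_m_src w i : is_edge q w (Mid_m i) -> is_source q w.
Proof. case: w => //= k; lia. Qed.

Definition Ym i := \sum_(w <- nodes q | is_edge q w (Mid_m i))
   loc_coef c w (Mid_m i) (Mid_n i) *m (src_coef c w (Mid_m i) *m msg w).

Lemma ev_m k i v : edge_vec q c msg k.+2 (Mid_m i) v =
  \sum_(w <- nodes q | is_edge q w (Mid_m i)) loc_coef c w (Mid_m i) v *m (src_coef c w (Mid_m i) *m msg w).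
Proof.
rewrite ev_S (_ : is_source q (Mid_m i) = false) //.
apply: eq_bigr => w /edge_m_src Hw. by rewrite ev_S Hw.
Qed.

Lemma ev_n k i v : (1 <= i <= q.+3)%N ->
  edge_vec q c msg k.+3 (Mid_n i) v = loc_coef c (Mid_m i) (Mid_n i) v *m Ym i.
Proof.
move=> Hi; rewrite ev_S (_ : is_source q (Mid_n i) = false) // nodes_sum.
rewrite [\sum_(j <- _ | is_edge q (Src_x j) _) _]sum_false; last by [].
rewrite [\sum_(j <- _ | is_edge q (Mid_n j) _) _]sum_false; last by [].
rewrite [\sum_(j <- _ | is_edge q (Term_r j) _) _]sum_false; last by [].
rewrite (sum_pred1 _ (a := i)); first last.
- move=> j; rewrite in_iota1 /= => Hj; lia.
- rewrite in_iota1; lia.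
- exact: iota_uniq.
rewrite (_ : is_edge q Src_s (Mid_n i) = false) // add0r !addr0 ev_m.
by rewrite add0r.
Qed.

Lemma Ym_eq i : Ym i =
  (if is_edge q Src_s (Mid_m i) then
     loc_coef c Src_s (Mid_m i) (Mid_n i) *m (src_coef c Src_s (Mid_m i) *m msg Src_s) else 0) +
  \sum_(k <- iota 1 q.+2 | is_edge q (Src_x k) (Mid_m i))
     loc_coef c (Src_x k) (Mid_m i) (Mid_n i) *m (src_coef c (Src_x k) (Mid_m i) *m msg (Src_x k)).
Proof.
rewrite /Ym nodes_sum.
rewrite [\sum_(j <- _ | is_edge q (Mid_m j) _) _]sum_false; last by [].
rewrite [\sum_(j <- _ | is_edge q (Mid_n j) _) _]sum_false; last by [].
rewrite [\sum_(j <- _ | is_edge q (Term_r j) _) _]sum_false; last by [].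
by rewrite !addr0.
Qed.

Lemma term_eq j : term_out q c msg (Term_r j) =
  (if is_edge q Src_s (Term_r j) then
     dec_coef c (Term_r j) Src_s *m (src_coef c Src_s (Term_r j) *m msg Src_s) else 0) +
  (\sum_(k <- iota 1 q.+2 | is_edge q (Src_x k) (Term_r j))
     dec_coef c (Term_r j) (Src_x k) *m (src_coef c (Src_x k) (Term_r j) *m msg (Src_x k)) +
   \sum_(i <- iota 1 q.+3 | is_edge q (Mid_n i) (Term_r j))
     dec_coef c (Term_r j) (Mid_n i) *m (loc_coef c (Mid_m i) (Mid_n i) (Term_r j) *m Ym i)).
Proof.
rewrite /term_out nodes_sum.
rewrite [\sum_(j <- _ | is_edge q (Mid_m j) _) _]sum_false; last by [].
rewrite [\sum_(j <- _ | is_edge q (Term_r j) _) _]sum_false; last by [].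
rewrite add0r addr0 /y_edge size_nodes.
congr (_ + (_ + _)).
- apply: eq_bigr => k Hk.
  rewrite ev_S (_ : is_source q (Src_x k) = true) //=; move: Hk => /=; lia.
- apply: eq_bigr => i Hi; rewrite ev_n //; move: Hi => /=; lia.
Qed.
End Net.

Section Sums2.
Variable V : zmodType.
Implicit Types (s : seq nat) (P : pred nat) (G : nat -> V).

Lemma sum_pred2 s P G a b : uniq s -> a \in s -> b \in s -> a != b ->
  {in s, forall i, P i = (i == a) || (i == b)} -> \sum_(i <- s | P i) G i = G a + G b.
Proof.
move=> us ha hb ab H; rewrite (bigID (pred1 a)) /=.
rewrite (sum_pred1 _ (a := a)) //; last first.
  by move=> i si; rewrite H //; case: (i == a); rewrite ?andbF ?andbT ?orbT.
rewrite (sum_pred1 _ (a := b)) //.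
move=> i si; rewrite H //; case: (eqVneq i a) => [->|] /=; last by rewrite andbT.
by rewrite (negbTE ab).
Qed.

Lemma iota_split q : iota 1 q.+2 = 1%N :: (iota 2 q ++ [:: q.+2]).
Proof. rewrite [in LHS](_ : q.+2 = (q.+1 + 1)%N); last by rewrite addn1. by rewrite iotaD. Qed.

Lemma sum_split q P G : \sum_(k <- iota 1 q.+2 | P k) G k =
  (if P 1%N then G 1%N else 0) + \sum_(k <- iota 2 q | P k) G k + (if P q.+2 then G q.+2 else 0).
Proof.
rewrite iota_split big_cons big_cat big_cons big_nil /=.
by case: (P 1%N); case: (P q.+2); rewrite ?addr0 ?add0r ?addrA.
Qed.

Lemma sum_seq1 P G a : \sum_(i <- [:: a] | P i) G i = if P a then G a else 0.
Proof. rewrite big_cons big_nil; by case: (P a); rewrite ?addr0. Qed.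

Lemma sum_last q P G : \sum_(k <- iota 1 q.+3 | P k) G k =
  \sum_(k <- iota 1 q.+2 | P k) G k + (if P q.+3 then G q.+3 else 0).
Proof.
have -> : iota 1 q.+3 = iota 1 q.+2 ++ [:: q.+3].
  rewrite [in LHS](_ : q.+3 = (q.+2 + 1)%N); last by rewrite addn1.
  by rewrite iotaD.
by rewrite big_cat sum_seq1.
Qed.
End Sums2.

Definition c0 (F : fieldType) (d q : nat) : vlnc F d :=
  VLNC (fun _ _ => 1%:M) (fun _ _ _ => 1%:M)
    (fun t u => match t with
                | Term_r j => if (j == q.+3)%N then 1%:M else
                    match u with
                    | Mid_n i => if (i == q.+3)%N then 1%:M else - 1%:M
                    | _ => - 1%:M end
                | _ => 0 end).

Section IfDir.
Variables (F : fieldType) (d q : nat) (msg : node -> 'cV[F]_d).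
Hypothesis hq : (2 <= q)%N.
Hypothesis hqF : (q%:R : F) = 0.
Let c := c0 F d q.
Local Notation x k := (msg (Src_x k)).
Local Notation s := (msg Src_s).
Local Notation X := (\sum_(k <- iota 2 q) msg (Src_x k)).
Local Notation Y := (Ym q c msg).

Lemma Y0 i : Y i = (if is_edge q Src_s (Mid_m i) then s else 0) +
  \sum_(k <- iota 1 q.+2 | is_edge q (Src_x k) (Mid_m i)) x k.
Proof.
rewrite Ym_eq; congr (_ + _); first by case: ifP; rewrite ?mul1mx.
by apply: eq_bigr => k _; rewrite !mul1mx.
Qed.

Lemma Y1 : Y 1%N = s + x 1%N.
Proof.
rewrite Y0 (sum_pred1 _ (a := 1%N)); [by [] | exact: iota_uniq | by [] |].
move=> k; rewrite in_iota1 /= => Hk; lia.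
Qed.

Lemma Ymid j : (2 <= j <= q.+1)%N ->
  Y j = (if (4 <= j)%N then s else 0) + (x 1%N + (X - x j) + x q.+2).
Proof.
move=> Hj; rewrite Y0 (_ : is_edge q Src_s (Mid_m j) = (4 <= j)%N); last by rewrite /=; lia.
congr (_ + _); rewrite sum_split.
rewrite (_ : is_edge q (Src_x 1) (Mid_m j) = true); last by rewrite /=; lia.
rewrite (_ : is_edge q (Src_x q.+2) (Mid_m j) = true); last by rewrite /=; lia.
rewrite (sum_but1 _ (a := j)); [by [] | exact: iota_uniq | by rewrite mem_iota; lia |].
move=> k; rewrite mem_iota /= => Hk; lia.
Qed.

Lemma Yq2 : Y q.+2 = s + X.
Proof.
rewrite Y0 (_ : is_edge q Src_s (Mid_m q.+2) = true); last by rewrite /=; lia.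
congr (_ + _); rewrite sum_split.
rewrite (_ : is_edge q (Src_x 1) (Mid_m q.+2) = false); last by rewrite /=; lia.
rewrite (_ : is_edge q (Src_x q.+2) (Mid_m q.+2) = false); last by rewrite /=; lia.
rewrite sum_true ?add0r ?addr0 //.
move=> k; rewrite mem_iota /= => Hk; lia.
Qed.

Lemma Yq3 : Y q.+3 = s + (x 1%N + X + x q.+2).
Proof.
rewrite Y0 (_ : is_edge q Src_s (Mid_m q.+3) = true); last by rewrite /=; lia.
congr (_ + _); rewrite sum_split.
rewrite (_ : is_edge q (Src_x 1) (Mid_m q.+3) = true); last by rewrite /=; lia.
rewrite (_ : is_edge q (Src_x q.+2) (Mid_m q.+3) = true); last by rewrite /=; lia.
rewrite sum_true //.
move=> k; rewrite mem_iota /= => Hk; lia.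
Qed.


Lemma dec_x j k : j != q.+3 -> dec_coef c (Term_r j) (Src_x k) = - 1%:M.
Proof. by rewrite /c /= => /negbTE ->. Qed.
Lemma dec_s j : j != q.+3 -> dec_coef c (Term_r j) Src_s = - 1%:M.
Proof. by rewrite /c /= => /negbTE ->. Qed.
Lemma dec_nj j : j != q.+3 -> dec_coef c (Term_r j) (Mid_n j) = - 1%:M.
Proof. by rewrite /c /= => /negbTE ->. Qed.
Lemma dec_nt j : dec_coef c (Term_r j) (Mid_n q.+3) = 1%:M.
Proof. by rewrite /c /= eqxx; case: ifP. Qed.
Lemma dec_t u : dec_coef c (Term_r q.+3) u = 1%:M.
Proof. by rewrite /c /= eqxx. Qed.

Lemma T0 j : (1 <= j <= q.+2)%N -> term_out q c msg (Term_r j) =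
  (if is_edge q Src_s (Term_r j) then - s else 0)
  - \sum_(k <- iota 1 q.+2 | is_edge q (Src_x k) (Term_r j)) x k - Y j + Y q.+3.
Proof.
move=> Hj; have jn : j != q.+3 by apply/eqP; lia.
rewrite term_eq [\sum_(i <- iota 1 q.+3 | _) _](sum_pred2 _ (a := j) (b := q.+3)); first last.
- move=> i; rewrite mem_iota /= => Hi; lia.
- by apply/eqP; lia.
- by rewrite mem_iota; lia.
- by rewrite mem_iota; lia.
- exact: iota_uniq.
rewrite dec_nj // dec_nt !mul1mx mulNmx mul1mx.
rewrite [\sum_(k <- _ | _) _](eq_bigr (fun k => - x k)); last first.
  by move=> k _; rewrite dec_x // !mul1mx mulNmx mul1mx.
rewrite sumrN; case: ifP => _; rewrite ?dec_s // ?mul1mx ?mulNmx ?mul1mx.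
  by rewrite !addrA.
by rewrite !addrA.
Qed.

Lemma T1 : term_out q c msg (Term_r 1) = x q.+2.
Proof.
rewrite T0 // (_ : is_edge q Src_s (Term_r 1) = false) // sum_split.
rewrite (_ : is_edge q (Src_x q.+2) (Term_r 1) = false); last by rewrite /=; lia.
rewrite (_ : is_edge q (Src_x 1) (Term_r 1) = false) //.
rewrite sum_true; last by move=> k; rewrite mem_iota /= => Hk; lia.
rewrite Y1 Yq3; apply/matrixP => a b; rewrite !mxE; ring.
Qed.

Lemma T23 j : (j == 2%N) || (j == 3%N) -> term_out q c msg (Term_r j) = x j.
Proof.
move=> Hj; rewrite T0; last by lia.
rewrite (_ : is_edge q Src_s (Term_r j) = true) //.
rewrite sum_false; last by move=> k _ /=; lia.
rewrite Ymid; last by lia.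
rewrite (_ : (4 <= j)%N = false); last by lia.
rewrite Yq3; apply/matrixP => a b; rewrite !mxE; ring.
Qed.

Lemma Tmid j : (4 <= j <= q.+1)%N -> term_out q c msg (Term_r j) = x j.
Proof.
move=> Hj; rewrite T0; last by lia.
rewrite (_ : is_edge q Src_s (Term_r j) = false); last by rewrite /=; lia.
rewrite sum_false; last by move=> k _ /=; lia.
rewrite Ymid; last by lia.
rewrite (_ : (4 <= j)%N = true); last by lia.
rewrite Yq3; apply/matrixP => a b; rewrite !mxE; ring.
Qed.

Lemma Tq2 : term_out q c msg (Term_r q.+2) = x q.+2.
Proof.
rewrite T0; last by lia.
rewrite (_ : is_edge q Src_s (Term_r q.+2) = false); last by rewrite /=; lia.
rewrite sum_split.
rewrite (_ : is_edge q (Src_x 1) (Term_r q.+2) = true); last by rewrite /=; lia.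
rewrite (_ : is_edge q (Src_x q.+2) (Term_r q.+2) = false); last by rewrite /=; lia.
rewrite sum_false; last by move=> k; rewrite mem_iota /= => Hk; lia.
rewrite Yq2 Yq3; apply/matrixP => a b; rewrite !mxE; ring.
Qed.

Lemma sum_const_seq (r : seq nat) (a : 'cV[F]_d) : \sum_(i <- r) a = a *+ size r.
Proof. elim: r => [|h r IH]; by rewrite ?big_nil ?big_cons ?IH ?mulrS. Qed.

Lemma Tq3 : term_out q c msg (Term_r q.+3) = x 1%N.
Proof.
rewrite term_eq (_ : is_edge q Src_s (Term_r q.+3) = false); last by rewrite /=; lia.
rewrite sum_false; last by move=> k _ /=; lia.
rewrite sum_last (_ : is_edge q (Mid_n q.+3) (Term_r q.+3) = false); last by rewrite /=; lia.
rewrite sum_true; last by move=> k; rewrite mem_iota /= => Hk; lia.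
rewrite (eq_bigr (fun i => Y i)); last by move=> i _; rewrite dec_t !mul1mx.
rewrite sum_split /= Y1 Yq2.
set A := x 1%N + X + x q.+2.
rewrite (eq_big_seq (fun i => (if (4 <= i)%N then s else 0) + (A - x i))); last first.
  move=> i; rewrite mem_iota => Hi; rewrite Ymid; last by lia.
  by rewrite /A; apply/matrixP => a b; rewrite !mxE; ring.
rewrite big_split /= sumrB sum_const_seq size_iota.
rewrite -{1}(subnKC hq) iotaD big_cat /= big_cons big_cons big_nil /=.
rewrite (eq_big_seq (fun _ => s)); last by move=> i; rewrite mem_iota => Hi; rewrite ifT //; lia.
rewrite sum_const_seq size_iota.
have HA : A *+ q = 0 by rewrite -scaler_nat hqF scale0r.
have Hs : s *+ (q - 2) = - (s + s).
  apply/eqP; rewrite -addr_eq0 -mulr2n -mulrnDr subnK // -scaler_nat hqF scale0r.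
  by [].
rewrite HA Hs /A; apply/matrixP => a b; rewrite !mxE; ring.
Qed.

End IfDir.

Lemma demand_mid q j : (2 <= j <= q.+2)%N -> demand q j = Src_x j.
Proof. move=> Hj; rewrite /demand ifF; last (apply/eqP; lia). rewrite ifF //; apply/eqP; lia. Qed.

Lemma if_dir (F : fieldType) (d q : nat) : (2 <= q)%N -> (q%:R : F) = 0 -> (0 < d)%N ->
  exists c : vlnc F d, is_solution q c /\ s_coef_e1 c != 0.
Proof.
move=> hq hqF hd; exists (c0 F d q); split.
  move=> msg j Hj.
  case: (ltnP j 2) => [Hj1|Hj2].
    have -> : j = 1%N by lia.
    by rewrite T1.
  case: (ltnP j 4) => [Hj3|Hj4].
    rewrite T23 ?demand_mid //; lia.
  case: (ltnP j q.+2) => [Hj5|Hj6].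
    rewrite Tmid ?demand_mid //; lia.
  case: (ltnP j q.+3) => [Hj7|Hj8].
    have -> : j = q.+2 by lia.
    rewrite Tq2 ?demand_mid //; lia.
  have -> : j = q.+3 by lia.
  by rewrite Tq3 // /demand eqxx.
rewrite /s_coef_e1 /= mul1mx; apply/negP => /eqP H.
have := congr1 (fun M : 'M[F]_d => M (Ordinal hd) (Ordinal hd)) H.
by rewrite !mxE eqxx /= => /eqP; rewrite oner_eq0.
Qed.

Section OnlyIf.
Variables (F : fieldType) (d q : nat) (c : vlnc F d).
Hypothesis hq : (2 <= q)%N.

Definition dx (k0 : nat) (z : 'cV[F]_d) : node -> 'cV[F]_d :=
  fun w => match w with Src_x k => if k == k0 then z else 0 | _ => 0 end.
Definition ds (z : 'cV[F]_d) : node -> 'cV[F]_d :=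
  fun w => match w with Src_s => z | _ => 0 end.

Definition Yx i k := if is_edge q (Src_x k) (Mid_m i) then
  loc_coef c (Src_x k) (Mid_m i) (Mid_n i) *m src_coef c (Src_x k) (Mid_m i) else 0.
Definition Ys i := if is_edge q Src_s (Mid_m i) then
  loc_coef c Src_s (Mid_m i) (Mid_n i) *m src_coef c Src_s (Mid_m i) else 0.
Definition Pn j i := dec_coef c (Term_r j) (Mid_n i) *m loc_coef c (Mid_m i) (Mid_n i) (Term_r j).

Lemma Ym_dx i k0 z : (1 <= k0 <= q.+2)%N -> Ym q c (dx k0 z) i = Yx i k0 *m z.
Proof.
move=> Hk; rewrite Ym_eq (_ : (if _ then _ else _) = 0); last by case: ifP; rewrite ?mulmx0.
rewrite add0r (eq_bigr (fun k => if k == k0 then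
   loc_coef c (Src_x k) (Mid_m i) (Mid_n i) *m src_coef c (Src_x k) (Mid_m i) *m z else 0)); last first.
  by move=> k _; rewrite /dx; case: (k == k0); rewrite ?mulmx0 ?mulmxA.
rewrite (sum_delta _ _ (iota_uniq _ _)); last by rewrite mem_iota; lia.
by rewrite /Yx; case: ifP; rewrite ?mul0mx.
Qed.

Lemma Ym_ds i z : Ym q c (ds z) i = Ys i *m z.
Proof.
rewrite Ym_eq big1 ?addr0; last by move=> k _; rewrite !mulmx0.
by rewrite /Ys; case: ifP; rewrite ?mul0mx ?mulmxA.
Qed.

Lemma mx_ext (A B : 'M[F]_d) : (forall z : 'cV[F]_d, A *m z = B *m z) -> A = B.
Proof.
move=> H; apply/matrixP => a b.
have := congr1 (fun M : 'cV[F]_d => M a 0) (H (delta_mx b 0)).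
by rewrite -!colE !mxE.
Qed.

Lemma term_mid j msg : (1 <= j <= q.+2)%N ->
  \sum_(i <- iota 1 q.+3 | is_edge q (Mid_n i) (Term_r j))
     dec_coef c (Term_r j) (Mid_n i) *m (loc_coef c (Mid_m i) (Mid_n i) (Term_r j) *m Ym q c msg i)
  = Pn j j *m Ym q c msg j + Pn j q.+3 *m Ym q c msg q.+3.
Proof.
move=> Hj; rewrite (sum_pred2 _ (a := j) (b := q.+3)); first last.
- move=> i; rewrite mem_iota /= => Hi; lia.
- by apply/eqP; lia.
- by rewrite mem_iota; lia.
- by rewrite mem_iota; lia.
- exact: iota_uniq.
by rewrite /Pn !mulmxA.
Qed.

Lemma term_top msg :
  \sum_(i <- iota 1 q.+3 | is_edge q (Mid_n i) (Term_r q.+3))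
     dec_coef c (Term_r q.+3) (Mid_n i) *m (loc_coef c (Mid_m i) (Mid_n i) (Term_r q.+3) *m Ym q c msg i)
  = \sum_(i <- iota 1 q.+2) Pn q.+3 i *m Ym q c msg i.
Proof.
rewrite sum_last (_ : is_edge q (Mid_n q.+3) (Term_r q.+3) = false); last by rewrite /=; lia.
rewrite sum_true; last by move=> k; rewrite mem_iota /= => Hk; lia.
by rewrite addr0; apply: eq_bigr => i _; rewrite /Pn mulmxA.
Qed.

Hypothesis Hsol : is_solution q c.

Lemma rj_dx j k z : (2 <= j <= q.+2)%N -> (1 <= k <= q.+2)%N ->
  is_edge q (Src_x k) (Term_r j) = false ->
  (Pn j j *m Yx j k + Pn j q.+3 *m Yx q.+3 k) *m z = dx k z (Src_x j).
Proof.
move=> Hj Hk He.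
have := Hsol (dx k z) (j := j); rewrite demand_mid // term_eq term_mid; last by lia.
rewrite (_ : (if _ then _ else _) = 0); last by case: ifP; rewrite ?mulmx0.
rewrite big1; last first.
  move=> k' Hk'; rewrite /dx; case: eqP => [e|_]; last by rewrite !mulmx0.
  by rewrite e He in Hk'.
rewrite !Ym_dx // mulmxDl !mulmxA => H; rewrite -H ?add0r //; lia.
Qed.

Lemma rj_ds j (z : 'cV[F]_d) : (4 <= j <= q.+2)%N ->
  (Pn j j *m Ys j + Pn j q.+3 *m Ys q.+3) *m z = 0.
Proof.
move=> Hj.
have := Hsol (ds z) (j := j); rewrite demand_mid; last by lia.
rewrite term_eq term_mid; last by lia.
rewrite ifF; last by rewrite /=; lia.
rewrite big1; last by move=> k' _; rewrite !mulmx0.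
rewrite !Ym_ds mulmxDl !mulmxA => H.
have H' := H ltac:(lia); rewrite !add0r in H'; exact: H'.
Qed.

Lemma rt_dx k z : (1 <= k <= q.+2)%N ->
  (\sum_(i <- iota 1 q.+2) Pn q.+3 i *m Yx i k) *m z = dx k z (Src_x 1).
Proof.
move=> Hk.
have := Hsol (dx k z) (j := q.+3); rewrite term_eq term_top.
rewrite ifF; last by rewrite /=; lia.
rewrite sum_false; last by move=> k' _ /=; lia.
rewrite mulmx_suml add0r (eq_bigr (fun i => Pn q.+3 i *m Yx i k *m z)); last first.
  by move=> i _; rewrite Ym_dx // mulmxA.
move=> H; have H' := H ltac:(lia); rewrite !add0r /demand eqxx in H'; exact: H'.
Qed.

Lemma rt_ds (z : 'cV[F]_d) :
  (\sum_(i <- iota 1 q.+2) Pn q.+3 i *m Ys i) *m z = 0.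
Proof.
have := Hsol (ds z) (j := q.+3); rewrite term_eq term_top.
rewrite ifF; last by rewrite /=; lia.
rewrite sum_false; last by move=> k' _ /=; lia.
rewrite mulmx_suml add0r (eq_bigr (fun i => Pn q.+3 i *m Ys i *m z)); last first.
  by move=> i _; rewrite Ym_ds // mulmxA.
move=> H; have H' := H ltac:(lia); rewrite !add0r /demand eqxx in H'; exact: H'.
Qed.

Lemma Yx_jj j : (2 <= j <= q.+2)%N -> Yx j j = 0.
Proof. move=> Hj; rewrite /Yx ifF //; rewrite /=; lia. Qed.

Lemma QN j : (2 <= j <= q.+2)%N -> Pn j q.+3 *m Yx q.+3 j = 1%:M.
Proof.
move=> Hj; apply: mx_ext => z.
have He : is_edge q (Src_x j) (Term_r j) = false by rewrite /=; lia.
have Hk : (1 <= j <= q.+2)%N by lia.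
have := rj_dx z Hj Hk He.
by rewrite Yx_jj // mulmx0 add0r mul1mx /dx eqxx.
Qed.

Lemma PYQN j k : (2 <= j <= q.+2)%N -> (2 <= k <= q.+2)%N -> k != j ->
  Pn j j *m Yx j k + Pn j q.+3 *m Yx q.+3 k = 0.
Proof.
move=> Hj Hk kj; apply: mx_ext => z.
have He : is_edge q (Src_x k) (Term_r j) = false by rewrite /=; lia.
have Hk' : (1 <= k <= q.+2)%N by lia.
have := rj_dx z Hj Hk' He.
by rewrite mul0mx /dx eq_sym (negbTE kj).
Qed.

Lemma PYQN1 j : (2 <= j <= q.+1)%N ->
  Pn j j *m Yx j 1 + Pn j q.+3 *m Yx q.+3 1 = 0.
Proof.
move=> Hj; apply: mx_ext => z.
have He : is_edge q (Src_x 1) (Term_r j) = false by rewrite /=; lia.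
have Hj' : (2 <= j <= q.+2)%N by lia.
have := rj_dx z Hj' (isT : (1 <= 1 <= q.+2)%N) He.
rewrite mul0mx /dx ifF //; apply/eqP; lia.
Qed.

Lemma PYQNs j : (4 <= j <= q.+2)%N ->
  Pn j j *m Ys j + Pn j q.+3 *m Ys q.+3 = 0.
Proof. move=> Hj; apply: mx_ext => z; rewrite mul0mx; exact: rj_ds. Qed.

Lemma N_unit k : (2 <= k <= q.+2)%N -> Yx q.+3 k \in unitmx.
Proof. by move=> Hk; case: (mulmx1_unit (QN Hk)). Qed.
Lemma Q_unit k : (2 <= k <= q.+2)%N -> Pn k q.+3 \in unitmx.
Proof. by move=> Hk; case: (mulmx1_unit (QN Hk)). Qed.

Lemma P_unit j : (2 <= j <= q.+2)%N -> Pn j j \in unitmx.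
Proof.
move=> Hj.
pose k := if j == 2%N then 3%N else 2%N.
have Hk : (2 <= k <= q.+2)%N by rewrite /k; case: ifP => _; lia.
have kj : k != j by rewrite /k; case: (eqVneq j 2%N) => [->|] //; rewrite eq_sym.
have e := PYQN Hj Hk kj.
have e' : Pn j q.+3 *m Yx q.+3 k = - (Pn j j *m Yx j k).
  by apply/eqP; rewrite -addr_eq0 addrC e.
have : Pn j j *m - Yx j k \in unitmx.
  by rewrite mulmxN -e' unitmx_mul Q_unit // N_unit.
by rewrite unitmx_mul => /andP[].
Qed.

Definition T j := - (Pn q.+3 j *m invmx (Pn j j) *m Pn j q.+3).

Lemma RT j (Y N : 'M[F]_d) : (2 <= j <= q.+2)%N ->
  Pn j j *m Y + Pn j q.+3 *m N = 0 -> Pn q.+3 j *m Y = T j *m N.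
Proof.
move=> Hj e.
have e' : Pn j j *m Y = - (Pn j q.+3 *m N) by apply/eqP; rewrite -addr_eq0 e.
by rewrite -[Y](mulKmx (P_unit Hj) Y) e' /T !mulmxN mulNmx !mulmxA.
Qed.

Hypothesis hnq : (q%:R : F) != 0.
Let W := \sum_(i <- iota 2 q.+1) T i.

Lemma sum_constM (r : seq nat) (a : 'M[F]_d) : \sum_(i <- r) a = a *+ size r.
Proof. elim: r => [|h r IH]; by rewrite ?big_nil ?big_cons ?IH ?mulrS. Qed.

Lemma iota12 : iota 1 q.+2 = 1%N :: iota 2 q.+1.
Proof. by []. Qed.

Lemma T_W k : (2 <= k <= q.+2)%N -> T k = W.
Proof.
move=> Hk.
have S0 : \sum_(i <- iota 1 q.+2) Pn q.+3 i *m Yx i k = 0.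
  apply: mx_ext => z; rewrite mul0mx rt_dx; last by lia.
  rewrite /dx ifF //; apply/eqP; lia.
move: S0; rewrite iota12 big_cons.
rewrite [Yx 1 k]/Yx ifF; last by rewrite /=; lia.
rewrite mulmx0 add0r.
rewrite (eq_big_seq (fun i => if i != k then T i *m Yx q.+3 k else 0)); last first.
  move=> i; rewrite mem_iota => Hi; case: (eqVneq i k) => [->|ik] /=.
    by rewrite Yx_jj ?mulmx0.
  have Hi' : (2 <= i <= q.+2)%N by lia.
  apply: (RT Hi'); apply: PYQN => //; by rewrite eq_sym.
have Hk2 : k \in iota 2 q.+1 by rewrite mem_iota; lia.
have -> : \sum_(i <- iota 2 q.+1) (if i != k then T i *m Yx q.+3 k else 0) = (W - T k) *m Yx q.+3 k.
  rewrite mulmxBl /W mulmx_suml (bigD1_seq k Hk2 (iota_uniq _ _)).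
  rewrite [in RHS](bigD1_seq k Hk2 (iota_uniq _ _)) /=.
  rewrite eqxx add0r [T k *m _ + _]addrC addrK.
  by apply: eq_bigr => i ->.
move=> H; have := congr1 (mulmx^~ (invmx (Yx q.+3 k))) H.
rewrite /= mulmxK ?N_unit // mul0mx => /eqP; rewrite subr_eq0 => /eqP ->.
by [].
Qed.

Lemma W0 : W = 0.
Proof.
have e : W = W *+ q.+1.
  rewrite {1}/W (eq_big_seq (fun _ => W)); first by rewrite sum_constM size_iota.
  by move=> i; rewrite mem_iota => Hi; apply: T_W; lia.
have : W *+ q = 0.
  apply: (addrI W); rewrite addr0 -mulrS; exact/esym.
rewrite -scaler_nat => /eqP; rewrite scaler_eq0 (negbTE hnq) /= => /eqP.
by [].
Qed.

Lemma Tz k : (2 <= k <= q.+2)%N -> T k = 0.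
Proof. by move=> Hk; rewrite T_W // W0. Qed.

Lemma R1unit : Pn q.+3 1 \in unitmx.
Proof.
have S1 : \sum_(i <- iota 1 q.+2) Pn q.+3 i *m Yx i 1 = 1%:M.
  by apply: mx_ext => z; rewrite mul1mx rt_dx.
move: S1; rewrite iota12 big_cons big1_seq ?addr0; last first.
  move=> i /andP[_]; rewrite mem_iota => Hi; case: (ltnP i q.+2) => Hi2.
    have e := PYQN1 (j := i) ltac:(lia).
    by rewrite (RT (j := i) ltac:(lia) e) Tz ?mul0mx //; lia.
  have -> : i = q.+2 by lia.
  rewrite /Yx ifF ?mulmx0 //; rewrite /=; lia.
by move=> H; case: (mulmx1_unit H).
Qed.

Lemma Ys1 : Ys 1 = 0.
Proof.
have S2 : \sum_(i <- iota 1 q.+2) Pn q.+3 i *m Ys i = 0.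
  by apply: mx_ext => z; rewrite mul0mx; exact: rt_ds.
move: S2; rewrite iota12 big_cons big1_seq ?addr0; last first.
  move=> i /andP[_]; rewrite mem_iota => Hi; case: (ltnP i 4) => Hi4.
    rewrite /Ys ifF ?mulmx0 //; rewrite /=; lia.
  have e := PYQNs (j := i) ltac:(lia).
  by rewrite (RT (j := i) ltac:(lia) e) Tz ?mul0mx //; lia.
by move=> H; rewrite -[Ys 1](mulKmx R1unit) H mulmx0.
Qed.

Lemma scoef0 : s_coef_e1 c = 0.
Proof. exact: Ys1. Qed.

End OnlyIf.

Theorem lemma3 (F : finFieldType) (p : nat) (hp : p \in [pchar F])
    (q d : nat) (hq : (2 <= q)%N) (hd : (0 < d)%N) :
  (exists c : vlnc F d, is_solution q c /\ s_coef_e1 c != 0) <-> (p %| q)%N.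
Proof.
split.
- move=> [c [Hs Hc]]; apply/negPn/negP => Hq.
  have hnq : (q%:R : F) != 0 by rewrite -(dvdn_pcharf hp).
  by move: Hc; rewrite (scoef0 hq Hs hnq) eqxx.
- move=> Hpq; apply: if_dir => //; apply/eqP; rewrite -(dvdn_pcharf hp) //.
Qed.
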